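(* For all integers $k,n\ge 1$, $$\zeta^*(k+1,\underbrace{1,\dots,1}_{n})=\sum_{t=1}^{n+1}\ \sum_{\substack{a_1+a_2+\dots+a_t=n+1-t\\ a_i\ge 0,\ i=1,\dots,t}}\zeta(a_t+k+1,\,a_1+1,\,a_2+1,\dots,a_{t-1}+1).$$
   Context: For positive integers $k_1,\dots,k_n$ with $k_1\ge 2$, $\zeta(k_1,\dots,k_n)=\sum_{m_1>\dots>m_n\ge 1}\prod_i m_i^{-k_i}$ and $\zeta^*(k_1,\dots,k_n)=\sum_{m_1\ge\dots\ge m_n\ge 1}\prod_i m_i^{-k_i}$. $\underbrace{1,\dots,1}_{n}$ denotes $n$ entries equal to $1$. For $t=1$ the summand is $\zeta(a_1+k+1)$. *)

(* Defs.v *)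
From HB Require Import structures.
From mathcomp Require Import all_boot all_order all_algebra.
From mathcomp Require Import all_classical all_reals all_analysis.
Set Implicit Arguments. Unset Strict Implicit. Unset Printing Implicit Defensive.
Import Order.TTheory GRing.Theory Num.Theory numFieldNormedType.Exports.
Local Open Scope ring_scope.

(* Truncated multiple zeta sum:
   mzv_trunc N [k1;...;kn] = sum_{N >= m1 > m2 > ... > mn >= 1} prod_i mi^{-ki} *)
Fixpoint mzv_trunc (R : realType) (N : nat) (ks : seq nat) : R :=
  match ks with
  | [::] => 1
  | k :: ks' => \sum_(1 <= m < N.+1) (m%:R ^- k) * mzv_trunc R m.-1 ks'
  end.

(* Truncated multiple zeta-star sum:
   mzsv_trunc N [k1;...;kn] = sum_{N >= m1 >= m2 >= ... >= mn >= 1} prod_i mi^{-ki} *)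
Fixpoint mzsv_trunc (R : realType) (N : nat) (ks : seq nat) : R :=
  match ks with
  | [::] => 1
  | k :: ks' => \sum_(1 <= m < N.+1) (m%:R ^- k) * mzsv_trunc R m ks'
  end.

Definition mzv (R : realType) (ks : seq nat) : R := limn (fun N => mzv_trunc R N ks).

Definition mzsv (R : realType) (ks : seq nat) : R := limn (fun N => mzsv_trunc R N ks).

(* Main.v *)
Require Import Defs.
From HB Require Import structures.
From mathcomp Require Import all_boot all_order all_algebra.
From mathcomp Require Import all_classical all_reals all_analysis.
From mathcomp Require Import zify ring lra.
Import Order.TTheory GRing.Theory Num.Theory numFieldNormedType.Exports.
Local Open Scope ring_scope.
Set Implicit Arguments. Unset Strict Implicit. Unset Printing Implicit Defensive.

Lemma splitS (R : realType) (j M : nat) :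
  mzsv_trunc R M.+1 (nseq j 1%N) =
  \sum_(c < j.+1) (M.+1%:R ^- c) * mzsv_trunc R M (nseq (j - c) 1%N).
Proof.
elim: j => [|j IH]; first by rewrite big_ord1 /= expr0 invr1 mul1r.
rewrite [LHS]/= big_nat_recr //= IH.
rewrite [RHS]big_ord_recl /= expr0 invr1 mul1r; congr (_ + _).
rewrite mulr_sumr; apply: eq_bigr => c _.
by rewrite /bump /= add1n subSS mulrA -invfM -exprD add1n.
Qed.

Lemma big_tuple_cons (R : realType) (T : finType) r (P : pred (r.+1.-tuple T))
   (F : r.+1.-tuple T -> R) :
  \sum_(a | P a) F a =
  \sum_(x : T) \sum_(b : r.-tuple T | P [tuple of x :: b]) F [tuple of x :: b].
Proof.
rewrite pair_big_dep /=.
rewrite (reindex (fun p : T * r.-tuple T => [tuple of p.1 :: p.2])) /=.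
  by apply: eq_bigl => -[x b].
exists (fun a => (thead a, [tuple of behead a])) => [[x b]|a] _ /=.
  by congr (_, _); apply: val_inj.
by rewrite [RHS]tuple_eta.
Qed.

Lemma big_tuple_rcons (R : realType) (T : finType) r (P : pred (r.+1.-tuple T))
   (F : r.+1.-tuple T -> R) :
  \sum_(a | P a) F a =
  \sum_(b : r.-tuple T) \sum_(x : T | P [tuple of rcons b x]) F [tuple of rcons b x].
Proof.
rewrite pair_big_dep /=.
rewrite (reindex (fun p : r.-tuple T * T => [tuple of rcons p.1 p.2])) /=.
  by apply: eq_bigl => -[x b].
exists (fun a => ([tuple of belast (thead a) (behead a)], last (thead a) (behead a))).
  move=> [[b Hb] x] _; rewrite /thead (tnth_nth x) /=.
  case: b Hb => [|y b] Hb /=; congr pair => //.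
  - exact: val_inj.
  - by apply: val_inj => /=; rewrite belast_rcons.
  - by rewrite last_rcons.
move=> a _; apply: val_inj => /=; rewrite -lastI.
by case: a => -[|y a].
Qed.
Definition Zs (R : realType) (n K M w : nat) : R :=
  \sum_(r < K) \sum_(b : r.-tuple 'I_n.+1 | ((\sum_(x <- b) (x : nat)) + r == w)%N)
     mzv_trunc R M (map S (map val b)).

Lemma Zs_ext R n K M w : (w < K)%N -> Zs R n K.+1 M w = Zs R n K M w.
Proof.
move=> wK; rewrite /Zs [LHS]big_ord_recr /=.
rewrite [X in _ + X]big_pred0 ?addr0 // => b.
apply: contraTF wK => /eqP <-; by rewrite -leqNgt leq_addl.
Qed.

Lemma Zs_ext2 R n K M w d : (w < K)%N -> Zs R n (K + d) M w = Zs R n K M w.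
Proof.
move=> wK; elim: d => [|d IH]; first by rewrite addn0.
by rewrite addnS Zs_ext ?IH // ltn_addr.
Qed.

Lemma Zs_wid R n K K' M w : (w < K)%N -> (w < K')%N -> Zs R n K M w = Zs R n K' M w.
Proof.
move=> h1 h2; rewrite -(subnKC h1) -(subnKC h2) !Zs_ext2 //.
Qed.

Lemma sum_ord_cut (R : realType) n w (H : nat -> R) :
  (w <= n)%N -> (forall c, (w < c)%N -> H c = 0) ->
  \sum_(x : 'I_n.+1) H x = \sum_(c < w.+1) H c.
Proof.
move=> wn H0.
rewrite -(big_mkord xpredT H) -(big_mkord xpredT H).
rewrite (big_cat_nat (n:=w.+1)) //= [X in _ + X]big1_seq ?addr0 //.
move=> i /andP[_]; rewrite mem_index_iota => /andP[h _]; exact: H0.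
Qed.

Lemma eq_cond_sub (c a w : nat) : (c <= w)%N -> (c + a == w)%N = (a == w - c)%N.
Proof. by move=> cw; apply/eqP/eqP => h; lia. Qed.

Lemma ZS (R : realType) n M w : (w <= n)%N ->
  Zs R n w.+1 M w = mzsv_trunc R M (nseq w 1%N).
Proof.
move: w; elim/ltn_ind: M => M IH w wn.
case: w wn => [|w] wn.
  rewrite /Zs big_ord1 /= (big_pred1 [tuple]) //= => b.
  by rewrite (tuple0 b) big_nil.
have E1 : mzsv_trunc R M (nseq w.+1 1%N) = \sum_(1 <= m < M.+1) \sum_(c < w.+1)
    m%:R ^- c.+1 * Zs R n w.+1 m.-1 (w - c).
  rewrite [LHS]/=; apply: eq_big_nat => m /andP[m1 mM].
  rewrite -{1 2}(prednK m1) splitS mulr_sumr; apply: eq_bigr => c _.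
  rewrite (prednK m1) -IH; last by rewrite leq_subLR ltnW // ltn_addl.
    rewrite (@Zs_wid _ _ (w - c).+1 w.+1) ?ltnS ?leq_subr //.
    by rewrite mulrA -invfM -exprD add1n.
  by rewrite -ltnS (prednK m1).
have E2 : Zs R n w.+2 M w.+1 = \sum_(r < w.+1) \sum_(c < w.+1)
   \sum_(b : r.-tuple 'I_n.+1 | (c + ((\sum_(x <- b) (x : nat)) + r) == w)%N)
   \sum_(1 <= m < M.+1) m%:R ^- c.+1 * mzv_trunc R m.-1 (map S (map val b)).
  rewrite /Zs big_ord_recl big_pred0 => [|b]; last by rewrite (tuple0 b) big_nil.
  rewrite add0r; apply: eq_bigr => r _; rewrite big_tuple_cons.
  set H := fun c : nat => \sum_(b : r.-tuple 'I_n.+1 | (c + ((\sum_(x <- b) (x : nat)) + r) == w)%N)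
   \sum_(1 <= m < M.+1) m%:R ^- c.+1 * mzv_trunc R m.-1 (map S (map val b)).
  transitivity (\sum_(x : 'I_n.+1) H x).
    apply: eq_bigr => x _; apply: eq_big => [b|b _] //=.
    by rewrite big_cons /bump add1n addnS eqSS addnA.
  apply: sum_ord_cut => [|c wc]; first exact: ltnW.
  rewrite /H big_pred0 // => b; apply/negbTE; rewrite neq_ltn; apply/orP; right.
  by apply: leq_trans wc _; rewrite leq_addr.
rewrite E1 E2 exchange_big /=.
rewrite [RHS]exchange_big; apply: eq_bigr => c _.
under eq_bigr => r _ do rewrite exchange_big.
rewrite exchange_big; apply: eq_bigr => m _.
rewrite /Zs mulr_sumr; apply: eq_bigr => r _; rewrite mulr_sumr.
apply: eq_bigl => b; apply: eq_cond_sub.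
by rewrite -ltnS.
Qed.

Lemma trunc_id (R : realType) k n N :
  mzsv_trunc R N (k.+1 :: nseq n 1%N) =
  \sum_(1 <= t < n.+2)
    \sum_(a : t.-tuple 'I_n.+1 | (\sum_(x <- a) (x : nat))%N == (n.+1 - t)%N)
      mzv_trunc R N ((nth 0%N (map val a) t.-1 + k.+1)%N
             :: map S (take t.-1 (map val a))).
Proof.
have E1 : mzsv_trunc R N (k.+1 :: nseq n 1%N) = \sum_(1 <= m < N.+1) \sum_(c < n.+1)
    m%:R ^- (c + k.+1) * Zs R n n.+1 m.-1 (n - c).
  rewrite [LHS]/=; apply: eq_big_nat => m /andP[m1 mM].
  rewrite -{2}(prednK m1) splitS mulr_sumr; apply: eq_bigr => c _.
  rewrite (prednK m1) -(@ZS _ n) ?leq_subr //.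
  rewrite (@Zs_wid _ _ (n - c).+1 n.+1) ?ltnS ?leq_subr //.
  by rewrite mulrA -invfM -exprD addnC.
rewrite E1 [RHS]big_add1 [RHS]big_mkord.
have E2 : forall r : 'I_n.+1,
  \sum_(a : r.+1.-tuple 'I_n.+1 | (\sum_(x <- a) (x : nat))%N == (n.+1 - r.+1)%N)
      mzv_trunc R N ((nth 0%N (map val a) r.+1.-1 + k.+1)%N
             :: map S (take r.+1.-1 (map val a))) =
  \sum_(c < n.+1) \sum_(1 <= m < N.+1) \sum_(b : r.-tuple 'I_n.+1 |
        ((\sum_(x <- b) (x : nat)) + r == n - c)%N)
     m%:R ^- (c + k.+1) * mzv_trunc R m.-1 (map S (map val b)).
  move=> r; rewrite big_tuple_rcons.
  under eq_bigr => b _.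
    rewrite big_mkcond.
    under eq_bigr => x _.
      rewrite big_rcons /= map_rcons -cats1 take_cat nth_cat size_map size_tuple ltnn subnn
        take0 cats0 /=.
      over.
    over.
  rewrite exchange_big /=; apply: eq_bigr => c _.
  rewrite -big_mkcond /= exchange_big; apply: eq_bigr => m _.
  apply: eq_bigl => b; have := ltn_ord r; have := ltn_ord c.
  by move=> h1 h2; apply/eqP/eqP => h; lia.
rewrite (eq_bigr _ (fun r _ => E2 r)) /=.
rewrite [RHS]exchange_big /=.
under [RHS]eq_bigr => c _ do rewrite exchange_big /=.
rewrite [RHS]exchange_big /=; apply: eq_bigr => m _; apply: eq_bigr => c _.
rewrite /Zs mulr_sumr; apply: eq_bigr => r _; rewrite mulr_sumr //.
Qed.
Lemma mzv_trunc_ge0 (R : realType) l M : 0 <= mzv_trunc R M l.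
Proof.
elim: l M => [|x l IH] M /=; first exact: ler01.
apply: sumr_ge0 => m _; apply: mulr_ge0; last exact: IH.
by rewrite invr_ge0 exprn_ge0.
Qed.

Lemma mzsv_trunc_ge0 (R : realType) l M : 0 <= mzsv_trunc R M l.
Proof.
elim: l M => [|x l IH] M /=; first exact: ler01.
apply: sumr_ge0 => m _; apply: mulr_ge0; last exact: IH.
by rewrite invr_ge0 exprn_ge0.
Qed.

Lemma mzv_trunc_nd (R : realType) l M M' : (M <= M')%N ->
  mzv_trunc R M l <= mzv_trunc R M' l.
Proof.
move=> MM; case: l => [|x l] //=.
rewrite [X in _ <= X](big_cat_nat (n:=M.+1)) //= lerDl.
apply: sumr_ge0 => m _; apply: mulr_ge0; last exact: mzv_trunc_ge0.
by rewrite invr_ge0 exprn_ge0.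
Qed.

Lemma mzsv_trunc_nd (R : realType) l M M' : (M <= M')%N ->
  mzsv_trunc R M l <= mzsv_trunc R M' l.
Proof.
move=> MM; case: l => [|x l] //=.
rewrite [X in _ <= X](big_cat_nat (n:=M.+1)) //= lerDl.
apply: sumr_ge0 => m _; apply: mulr_ge0; last exact: mzsv_trunc_ge0.
by rewrite invr_ge0 exprn_ge0.
Qed.

Lemma tele (R : realType) (f : nat -> R) N :
  let g m := \sum_(1 <= i < m.+1) i%:R ^- 1 * f i in
  \sum_(1 <= m < N.+1) g m / (m%:R * m.+1%:R) + g N.+1 / N.+1%:R =
  \sum_(1 <= m < N.+2) f m / m%:R ^+ 2.
Proof.
move=> g; elim: N => [|N IH].
  rewrite big_geq // add0r big_nat1 /g big_nat1.
  by rewrite !expr1n !invr1 !mul1r.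
rewrite (big_nat_recr N.+1) //= (big_nat_recr N.+2) //= -IH.
have -> : g N.+2 = g N.+1 + N.+2%:R ^- 1 * f N.+2 by rewrite /g (big_nat_recr N.+2).
have h1 : N.+1%:R != 0 :> R by rewrite pnatr_eq0.
have -> : N.+2%:R = N.+1%:R + 1 :> R by rewrite -addn1 natrD.
have h3 : N.+1%:R + 1 != 0 :> R by rewrite natr1 pnatr_eq0.
rewrite expr1.
field.
have e : 1 + N%:R = N.+1%:R :> R by rewrite -natr1 addrC.
by rewrite e natr1 !pnatr_eq0.
Qed.

Lemma tele1 (R : realType) N :
  \sum_(1 <= m < N.+1) (m%:R * m.+1%:R)^-1 + N.+1%:R^-1 = 1 :> R.
Proof.
elim: N => [|N IH]; first by rewrite big_geq // add0r invr1.
rewrite (big_nat_recr N.+1) //= -[RHS]IH -addrA; congr (_ + _).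
have h1 : N.+1%:R != 0 :> R by rewrite pnatr_eq0.
have -> : N.+2%:R = N.+1%:R + 1 :> R by rewrite -addn1 natrD.
have h3 : N.+1%:R + 1 != 0 :> R by rewrite natr1 pnatr_eq0.
field.
have e : 1 + N%:R = N.+1%:R :> R by rewrite -natr1 addrC.
by rewrite e natr1 !pnatr_eq0.
Qed.

Lemma inv_sq_le (R : realType) (x : R) : 1 <= x ->
  (x ^+ 2)^-1 <= 2 * (x * (x + 1))^-1.
Proof.
move=> x1.
have h0 : x != 0 by apply/lt0r_neq0; lra.
have h1 : x + 1 != 0 by apply/lt0r_neq0; lra.
have -> : (x ^+ 2)^-1 = 2 * (x * (x + 1))^-1 - (x - 1) / (x ^+ 2 * (x + 1)).
  by field; rewrite h0 h1.
rewrite gerBl; apply: divr_ge0; first lra.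
apply: mulr_ge0; [exact: sqr_ge0 | lra].
Qed.

Definition U (R : realType) j N : R :=
  \sum_(1 <= m < N.+1) m%:R ^- 2 * mzsv_trunc R m (nseq j 1%N).

Lemma U_bound (R : realType) j N : U R j N <= 2 ^+ j.+1.
Proof.
elim: j N => [|j IH] N.
  rewrite /U expr1.
  apply: (@le_trans _ _ (2 * \sum_(1 <= m < N.+1) (m%:R * m.+1%:R)^-1)).
    rewrite mulr_sumr; apply: ler_sum_nat => m /andP[m1 _] /=.
    by rewrite mulr1 -[m.+1%:R]natr1 inv_sq_le // ler1n.
  apply: (@le_trans _ _ (2 * (\sum_(1 <= m < N.+1) (m%:R * m.+1%:R)^-1 + N.+1%:R^-1))).
    by rewrite ler_pM2l ?ltr0n // lerDl invr_ge0 ler0n.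
  by rewrite tele1 mulr1.
apply: (@le_trans _ _ (2 * U R j N.+1)); last first.
  by rewrite exprS ler_pM2l ?ltr0n.

have T := tele (fun i => mzsv_trunc R i (nseq j 1%N)) N.
move: T; set g := fun m => \sum_(1 <= i < m.+1) _ => T.
have Ug : U R j.+1 N = \sum_(1 <= m < N.+1) m%:R ^- 2 * g m by [].
have -> : U R j N.+1 = \sum_(1 <= m < N.+2) mzsv_trunc R m (nseq j 1%N) / m%:R ^+ 2.
  by rewrite /U; apply: eq_bigr => m _; rewrite mulrC.
rewrite Ug -T.
have g0 : forall m, 0 <= g m.
  move=> m; apply: sumr_ge0 => i _; apply: mulr_ge0; last exact: mzsv_trunc_ge0.
  by rewrite invr_ge0 exprn_ge0.
apply: (@le_trans _ _ (2 * \sum_(1 <= m < N.+1) g m / (m%:R * m.+1%:R))).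
  rewrite mulr_sumr; apply: ler_sum_nat => m /andP[m1 _] /=.
  rewrite [X in _ <= X]mulrA [2 * g m]mulrC -mulrA [X in X <= _]mulrC ler_wpM2l //.
  by rewrite -[m.+1%:R]natr1 inv_sq_le // ler1n.
rewrite ler_pM2l ?ltr0n // lerDl; apply: divr_ge0 => //.
Qed.

Lemma lim_sum_mono (R : realType) (u : nat -> R) (B : R) (r : seq nat)
  (I : nat -> finType) (P : forall t, pred (I t)) (v : forall t, I t -> nat -> R) :
  (forall N, u N = \sum_(t <- r) \sum_(a : I t | P t a) v t a N) ->
  uniq r ->
  (forall N, u N <= B) ->
  (forall t a N M, (N <= M)%N -> v t a N <= v t a M) ->
  (forall t a N, 0 <= v t a N) ->
  limn u = \sum_(t <- r) \sum_(a : I t | P t a) limn (v t a).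
Proof.
move=> uE ur uB vnd v0.
have vB : forall t a N, t \in r -> P t a -> v t a N <= B.
  move=> t a N tr Pa; apply: le_trans (uB N).
  rewrite uE (bigD1_seq t) //= (bigD1 a) //= -addrA lerDl.
  by apply: addr_ge0; apply: sumr_ge0 => *; [exact: v0 | apply: sumr_ge0 => *; exact: v0].
have cv : forall t a, t \in r -> P t a -> cvgn (v t a).
  move=> t a tr Pa; apply: nondecreasing_is_cvgn.
    by move=> N M; exact: vnd.
  by exists B => _ [N _ <-]; exact: vB.
have -> : u = fun N => \sum_(t <- r) \sum_(a : I t | P t a) v t a N.
  by apply: funext => N; exact: uE.
apply: cvg_lim => //.
rewrite big_seq; under eq_cvg do rewrite big_seq.
apply: (cvg_big add_continuous) => // t tr.
apply: (cvg_big add_continuous) => // a Pa.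
exact: cv.
Qed.

Lemma bound_s (R : realType) s n N : (2 <= s)%N ->
  mzsv_trunc R N (s :: nseq n 1%N) <= U R n N.
Proof.
move=> s2; rewrite /U /=; apply: ler_sum_nat => m /andP[m1 _].
apply: ler_wpM2r; first exact: mzsv_trunc_ge0.
rewrite lef_pV2 ?posrE ?exprn_gt0 ?ltr0n //.
by apply: ler_weXn2l; rewrite ?ler1n.
Qed.

Theorem proposition2p3 (R : realType) (k n : nat) :
  (1 <= k)%N -> (1 <= n)%N ->
  mzsv R (k.+1 :: nseq n 1%N) =
  \sum_(1 <= t < n.+2)
    \sum_(a : t.-tuple 'I_n.+1 | (\sum_(x <- a) (x : nat))%N == (n.+1 - t)%N)
      mzv R ((nth 0%N (map val a) t.-1 + k.+1)%N
             :: map S (take t.-1 (map val a))).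
Proof.
move=> k1 n1; rewrite /mzsv /mzv.
apply: (@lim_sum_mono R _ (2 ^+ n.+1) _ (fun t => t.-tuple 'I_n.+1)
  (fun t a => (\sum_(x <- a) (x : nat))%N == (n.+1 - t)%N)
  (fun t a N => mzv_trunc R N ((nth 0%N (map val a) t.-1 + k.+1)%N
             :: map S (take t.-1 (map val a))))).
- by move=> N; exact: trunc_id.
- exact: iota_uniq.
- by move=> N; apply: le_trans (U_bound R n N); apply: bound_s; rewrite ltnS.
- by move=> t a N M NM; exact: mzv_trunc_nd.
- by move=> t a N; exact: mzv_trunc_ge0.
Qed.
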